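(* Let $D$ be an oriented graph whose missing graph is a vertex-disjoint union of paths, and let $ab$, $xy$, $zt$ be missing edges of $D$. If $xy$ loses to $ab$ and $zt$ loses to $ab$, then $\{x,y\}\cap\{z,t\}\neq\emptyset$.
   Context: All digraphs are finite oriented graphs. $N^+(v)$ is the out-neighborhood; $N^{++}(v)$ is the set of vertices $w\notin N^+(v)\cup\{v\}$ with $u\to w$ for some $u\in N^+(v)$. A missing edge is a pair of distinct non-adjacent vertices; the missing graph is formed by the missing edges. For missing edges $\{x,y\},\{a,b\}$, $\{x,y\}$ loses to $\{a,b\}$ if the endpoints can be labelled so that $x\to a$, $b\notin N^+(x)\cup N^{++}(x)$, $y\to b$, $a\notin N^+(y)\cup N^{++}(y)$. *)

(* Defs.v *)
From mathcomp Require Import all_boot.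
Set Implicit Arguments. Unset Strict Implicit. Unset Printing Implicit Defensive.

Definition oriented (T : finType) (arc : rel T) : Prop :=
  (forall v, ~~ arc v v) /\ (forall u v, arc u v -> ~~ arc v u).

Definition outN (T : finType) (arc : rel T) (v : T) : {set T} :=
  [set w | arc v w].

Definition outN2 (T : finType) (arc : rel T) (v : T) : {set T} :=
  [set w | (w \notin outN arc v) && (w != v) &&
           [exists u, (u \in outN arc v) && arc u w]].

Definition missing (T : finType) (arc : rel T) (x y : T) : bool :=
  [&& x != y, ~~ arc x y & ~~ arc y x].

Definition loses_lab (T : finType) (arc : rel T) (x y a b : T) : Prop :=
  [/\ arc x a, b \notin outN arc x :|: outN2 arc x,
      arc y b & a \notin outN arc y :|: outN2 arc y].

Definition loses_to (T : finType) (arc : rel T) (x y a b : T) : Prop :=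
  exists x' y' a' b',
    ((x' = x /\ y' = y) \/ (x' = y /\ y' = x)) /\
    ((a' = a /\ b' = b) \/ (a' = b /\ b' = a)) /\
    loses_lab arc x' y' a' b'.

(* Vertices not on any listed sequence are isolated (trivial paths). *)
Definition union_of_paths (T : finType) (adj : rel T) : Prop :=
  exists ps : seq (seq T),
    uniq (flatten ps) /\
    forall x y, adj x y <->
      exists2 p, p \in ps &
        ((x, y) \in zip p (behead p)) || ((y, x) \in zip p (behead p)).

Definition missing_graph (T : finType) (arc : rel T) : rel T :=
  fun x y => missing arc x y.

(* Main.v *)
Require Import Defs.
From mathcomp Require Import all_boot.
From mathcomp Require Import zify.
Set Implicit Arguments. Unset Strict Implicit.

Lemma zip_consec (T : eqType) (p : seq T) v w :
  (v, w) \in zip p (behead p) -> exists s1 s2, p = s1 ++ v :: w :: s2.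
Proof.
elim: p => [|h r IH] //=.
case: r IH => [|h2 r'] IH //=.
rewrite in_cons => /orP [/eqP [-> ->]|H].
  by exists [::], r'.
have [s1 [s2 E]] := IH H.
by exists (h :: s1), s2; rewrite E.
Qed.

Lemma flatten_split (T : eqType) (ps : seq (seq T)) p :
  p \in ps -> exists A B, flatten ps = A ++ p ++ B.
Proof.
elim: ps => [|q ps IH] //=.
rewrite in_cons => /orP [/eqP ->|H].
  by exists [::], (flatten ps).
have [A [B E]] := IH H.
by exists (q ++ A), B; rewrite E catA.
Qed.

Lemma consec_index (T : eqType) (s L R : seq T) v w :
  uniq s -> s = L ++ v :: w :: R ->
  [/\ index w s = (index v s).+1, v \in s & w \in s].
Proof.
move=> U E; subst s.
move: U; rewrite cat_uniq => /and3P [_ H2 H3].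
have HvL : v \notin L by apply: contra H2 => H; apply/hasP; exists v; rewrite ?inE ?eqxx.
have HwL : w \notin L by apply: contra H2 => H; apply/hasP; exists w; rewrite ?inE ?eqxx ?orbT.
have Hvw : v != w by move: H3 => /= /andP [+ _]; rewrite inE negb_or => /andP [].
rewrite !index_cat (negbTE HvL) (negbTE HwL) /= eqxx (negbTE Hvw).
rewrite eqxx addnS; split => //; rewrite mem_cat !in_cons eqxx ?orbT //.
Qed.

Lemma edge_pos (T : finType) (adj : rel T) (ps : seq (seq T)) u v :
  uniq (flatten ps) ->
  (forall x y, adj x y <->
      exists2 p, p \in ps &
        ((x, y) \in zip p (behead p)) || ((y, x) \in zip p (behead p))) ->
  adj u v ->
  [/\ u \in flatten ps, v \in flatten ps &
   (index u (flatten ps) = (index v (flatten ps)).+1 \/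
    index v (flatten ps) = (index u (flatten ps)).+1)].
Proof.
move=> U Hadj /Hadj [p Hp /orP [H|H]];
  have [s1 [s2 E1]] := zip_consec H;
  have [A [B E2]] := flatten_split Hp;
  rewrite E1 -catA /= catA in E2;
  have [I1 I2 I3] := consec_index U E2; split => //; auto.
Qed.

Lemma idx_inj (T : eqType) (s : seq T) u v :
  u \in s -> v \in s -> index u s = index v s -> u = v.
Proof.
move=> Hu Hv E.
by rewrite -(nth_index u Hu) E (nth_index u Hv).
Qed.

Lemma noarc (T : finType) (arc : rel T) u c d w :
  oriented arc -> arc u c -> d \notin outN arc u :|: outN2 arc u ->
  arc w d -> ~~ arc u w.
Proof.
move=> [Hirr Has] Huc Hd Hwd; apply/negP => Huw.
move: Hd; rewrite !inE negb_or => /andP [Hd1 Hd2].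
move: Hd2; rewrite Hd1 /=.
case: (eqVneq d u) => [Edu|Ndu] /=.
  by subst d; move: (Has _ _ Huw); rewrite Hwd.
move=> /negP; apply; apply/existsP; exists w; by rewrite inE Huw Hwd.
Qed.

Lemma core (T : finType) (arc : rel T) (a b x y z t : T) :
  oriented arc -> union_of_paths (missing_graph arc) ->
  missing arc x y -> missing arc z t ->
  x != z -> x != t -> y != z -> y != t ->
  loses_lab arc x y a b -> loses_lab arc z t a b -> False.
Proof.
move=> Hor [ps [U Hadj]] Mxy Mzt Nxz Nxt Nyz Nyt [Hxa Hbx Hyb Hay] [Hza Hbz Htb Hat].
have Mxt : missing_graph arc x t.
  rewrite /missing_graph /missing Nxt (noarc Hor Hxa Hbx Htb).
  by rewrite (noarc Hor Htb Hat Hxa).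
have Myz : missing_graph arc y z.
  rewrite /missing_graph /missing Nyz (noarc Hor Hyb Hay Hza).
  by rewrite (noarc Hor Hza Hbz Hyb).
have [X1 Y1 E1] := edge_pos U Hadj Mxy.
have [Z2 T2 E2] := edge_pos U Hadj Mzt.
have [_ _ E3] := edge_pos U Hadj Mxt.
have [_ _ E4] := edge_pos U Hadj Myz.
have F1 : index x (flatten ps) != index z (flatten ps).
  by apply/eqP => /(idx_inj X1 Z2) /eqP; rewrite (negbTE Nxz).
have F2 : index y (flatten ps) != index t (flatten ps).
  by apply/eqP => /(idx_inj Y1 T2) /eqP; rewrite (negbTE Nyt).
move/eqP: F1; move/eqP: F2; move: E1 E2 E3 E4.
generalize (index x (flatten ps)) (index y (flatten ps)) (index z (flatten ps)) (index t (flatten ps)).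
clear; move=> i j k l; lia.
Qed.

Lemma lab_sym (T : finType) (arc : rel T) x y a b :
  loses_lab arc x y a b -> loses_lab arc y x b a.
Proof. by case. Qed.

Lemma miss_sym (T : finType) (arc : rel T) x y :
  missing arc x y -> missing arc y x.
Proof. by rewrite /missing eq_sym andbC andbA => /andP [/andP[-> ->] ->]. Qed.

Lemma core2 (T : finType) (arc : rel T) (c d p q r s : T) :
  oriented arc -> union_of_paths (missing_graph arc) ->
  missing arc p q -> missing arc r s ->
  p != r -> p != s -> q != r -> q != s ->
  loses_lab arc p q c d -> loses_lab arc r s c d \/ loses_lab arc r s d c -> False.
Proof.
move=> Ho Hu M1 M2 N1 N2 N3 N4 L1 [L2|L2].
  exact: (core Ho Hu M1 M2 N1 N2 N3 N4 L1 L2).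
move/lab_sym: L2 => L2.
exact: (core Ho Hu M1 (miss_sym M2) N2 N1 N4 N3 L1 L2).
Qed.

Theorem lemma4p2 (T : finType) (arc : rel T) (a b x y z t : T) :
  oriented arc ->
  union_of_paths (missing_graph arc) ->
  missing arc a b -> missing arc x y -> missing arc z t ->
  loses_to arc x y a b -> loses_to arc z t a b ->
  [set x; y] :&: [set z; t] != set0.
Proof.
move=> Hor Hu _ Mxy Mzt [x' [y' [a' [b' [Hxy [Hab L1]]]]]]
  [z' [t' [a'' [b'' [Hzt [Hab2 L2]]]]]].
apply/negP => /eqP H.
have Nin : forall u, u \in [set x; y] -> u \in [set z; t] -> False.
  move=> u H1 H2; have: u \in [set x; y] :&: [set z; t] by rewrite inE H1 H2.
  by rewrite H inE.
have N1 : x != z by apply/eqP => e; apply: (Nin x); rewrite !inE ?e eqxx ?orbT.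
have N2 : x != t by apply/eqP => e; apply: (Nin x); rewrite !inE ?e eqxx ?orbT.
have N3 : y != z by apply/eqP => e; apply: (Nin y); rewrite !inE ?e eqxx ?orbT.
have N4 : y != t by apply/eqP => e; apply: (Nin y); rewrite !inE ?e eqxx ?orbT.
have N1' := N1; rewrite eq_sym in N1'.
have N2' := N2; rewrite eq_sym in N2'.
have N3' := N3; rewrite eq_sym in N3'.
have N4' := N4; rewrite eq_sym in N4'.
have Myx := miss_sym Mxy. have Mtz := miss_sym Mzt.
case: Hxy => [[E1 E2]|[E1 E2]]; case: Hzt => [[E3 E4]|[E3 E4]];
case: Hab => [[E5 E6]|[E5 E6]]; case: Hab2 => [[E7 E8]|[E7 E8]]; subst;
  first [ by apply: (core2 Hor Hu _ _ _ _ _ _ L1 (or_introl L2))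
        | by apply: (core2 Hor Hu _ _ _ _ _ _ L1 (or_intror L2)) ].
Qed.
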